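(* Let $\Gamma\neq\mathbb N$ be a telescopic numerical semigroup. Then $(\mathrm e(\Gamma)-2)\,2^{\mathrm e(\Gamma)}+2\le \mathrm c(\Gamma)$.
   Context: A numerical semigroup is a submonoid of $(\mathbb N,+)$ with finite complement in $\mathbb N$; it has a unique minimal generating system, whose cardinality is the embedding dimension $\mathrm e(\Gamma)$. $\mathrm F(\Gamma)$ is the largest integer not in $\Gamma$, and $\mathrm c(\Gamma)=\mathrm F(\Gamma)+1$. $\langle X\rangle$ is the submonoid generated by $X$. For an arrangement $(r_0,\ldots,r_h)$ of the minimal generators, set $d_k=\gcd(r_0,\ldots,r_{k-1})$. A set $A$ of positive integers with nontrivial partition $A=A_1\cup A_2$ is the gluing of $A_1$ and $A_2$ if $\mathrm{lcm}(\gcd A_1,\gcd A_2)\in\langle A_1\rangle\cap\langle A_2\rangle$. $\Gamma$ is free for $(r_0,\ldots,r_h)$ if $h=0$, or $h\ge1$, $\{r_0,\ldots,r_h\}$ is the gluing of $\{r_0,\ldots,r_{h-1}\}$ and $\{r_h\}$, and $\langle r_0/d_h,\ldots,r_{h-1}/d_h\rangle$ is free for $(r_0/d_h,\ldots,r_{h-1}/d_h)$. $\Gamma$ is telescopic if it is free for the arrangement of its minimal generators in increasing order. *)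

(* Defs.v *)
From mathcomp Require Import all_boot.
Set Implicit Arguments. Unset Strict Implicit. Unset Printing Implicit Defensive.

Definition numerical_semigroup (G : nat -> Prop) : Prop :=
  [/\ G 0,
      (forall a b, G a -> G b -> G (a + b)) &
      (exists N, forall n, N <= n -> G n)].

Definition in_gen (s : seq nat) (n : nat) : Prop :=
  exists c : nat -> nat, n = \sum_(i < size s) c i * nth 0 s i.

Definition generates (s : seq nat) (G : nat -> Prop) : Prop :=
  forall n, G n <-> in_gen s n.

(* s (without repetitions) is a minimal generating system of G:
   it generates G and no proper subset does (removing any element breaks it;
   since generation is monotone this is minimality w.r.t. inclusion). *)
Definition minimal_generating_system (G : nat -> Prop) (s : seq nat) : Prop :=
  [/\ uniq s, generates s G &
      forall x, x \in s -> ~ generates (rem x s) G].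

Definition gcd_seq (s : seq nat) : nat := foldr gcdn 0 s.

(* Freeness for an arrangement (r_0,...,r_h), with fuel n >= size s.
   h = 0 : free.  h >= 1 : with d_h = gcd(r_0..r_{h-1}),
   {r_0..r_h} is the gluing of {r_0..r_{h-1}} and {r_h}, i.e.
   lcm(d_h, r_h) lies in <r_0..r_{h-1}> and in <r_h>, and
   (r_0/d_h, ..., r_{h-1}/d_h) is free. *)
Fixpoint free_fuel (n : nat) (s : seq nat) : Prop :=
  match n with
  | 0 => False
  | n'.+1 =>
      if size s == 1 then True
      else
        let t := take (size s).-1 s in
        let r := last 0 s in
        let d := gcd_seq t in
        [/\ 1 < size s,
            in_gen t (lcmn (gcd_seq t) (gcd_seq [:: r])),
            in_gen [:: r] (lcmn (gcd_seq t) (gcd_seq [:: r])) &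
            free_fuel n' (map (fun x => x %/ d) t)]
  end.

Definition free_arrangement (s : seq nat) : Prop := free_fuel (size s) s.

Definition telescopic_with (G : nat -> Prop) (s : seq nat) : Prop :=
  [/\ minimal_generating_system G s, sorted ltn s & free_arrangement s].

(* Main.v *)
Require Import Defs.
From mathcomp Require Import all_boot zify.

Fixpoint ing (s : seq nat) (n : nat) : Prop :=
  match s with
  | [::] => n = 0
  | a :: s' => exists k m, ing s' m /\ n = k * a + m
  end.

Lemma in_gen_ing s n : in_gen s n <-> ing s n.
Proof.
elim: s n => [|a s IH] n.
  by split => [[c ->]|->]; [rewrite big_ord0 | exists (fun _ => 0); rewrite big_ord0].
split.
  case=> c ->; rewrite big_ord_recl /=.
  exists (c 0), (\sum_(i < size s) c i.+1 * nth 0 s i); split => //.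
  by apply/IH; exists (fun i => c i.+1).
case=> k [m [/IH [c ->] ->]].
exists (fun i => if i is j.+1 then c j else k).
by rewrite big_ord_recl /=.
Qed.

Lemma ing0 s : ing s 0.
Proof. by elim: s => [|a s IH] //=; exists 0, 0. Qed.

Lemma ing_add s a b : ing s a -> ing s b -> ing s (a + b).
Proof.
elim: s a b => [|x s IH] a b /=; first by move=> -> ->.
case=> k [m [Hm ->]] [k' [m' [Hm' ->]]].
exists (k + k'), (m + m'); split; first exact: IH.
by rewrite mulnDl; lia.
Qed.

Lemma ing_mul s j a : ing s a -> ing s (j * a).
Proof.
move=> Ha; elim: j => [|j IH]; first exact: ing0.
by rewrite mulSn; apply: ing_add.
Qed.

Lemma ing_catl u v m : ing u m -> ing (u ++ v) m.
Proof.
elim: u m => [|x u IH] m /=; first by move=> ->; apply: ing0.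
by case=> k [m' [H ->]]; exists k, m'; split => //; apply: IH.
Qed.

Lemma ing_mid u x v n :
  ing (u ++ x :: v) n <-> exists k m, ing (u ++ v) m /\ n = k * x + m.
Proof.
elim: u n => [|y u IH] n /=; first by [].
split.
  case=> k [m [/IH [j [m' [H1 ->]]] ->]].
  exists j, (k * y + m'); split; last by lia.
  by exists k, m'.
case=> j [m [[k [m' [H1 ->]]] ->]].
exists k, (j * x + m'); split; last by lia.
by apply/IH; exists j, m'.
Qed.

Lemma ing_scale t d n :
  ing (map (fun x => x * d) t) n <-> exists m, ing t m /\ n = m * d.
Proof.
elim: t n => [|y t IH] n /=.
  by split => [->|[m [-> ->]]]; [exists 0|].
split.
  case=> k [m [/IH [m' [H1 ->]] ->]].
  exists (k * y + m'); split; last by rewrite mulnDl mulnA.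
  by exists k, m'.
case=> m [[k [m' [H1 ->]]] ->].
exists k, (m' * d); split; last by rewrite mulnDl mulnA.
by apply/IH; exists m'.
Qed.

Lemma gcd_seq_rcons t r : gcd_seq (t ++ [:: r]) = gcdn (gcd_seq t) r.
Proof.
elim: t => [|x t IH] /=; first by rewrite gcdn0 gcd0n.
by rewrite /gcd_seq /= in IH *; rewrite IH gcdnA.
Qed.

Lemma gcd_seq_dvd s x : x \in s -> gcd_seq s %| x.
Proof.
elim: s => [|y s IH] //=; rewrite in_cons => /orP [/eqP ->|H].
  exact: dvdn_gcdl.
apply: dvdn_trans (IH H); exact: dvdn_gcdr.
Qed.

Lemma gcd_seq_scale t d : gcd_seq (map (fun x => x * d) t) = gcd_seq t * d.
Proof.
elim: t => [|y t IH] //=.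
by rewrite /gcd_seq /= in IH *; rewrite IH muln_gcdl.
Qed.

Lemma ing_dvd s n : ing s n -> gcd_seq s %| n.
Proof.
elim: s n => [|y s IH] n /=; first by move=> ->.
case=> k [m [H ->]]; apply: dvdn_add.
  by apply: dvdn_mull; apply: dvdn_gcdl.
apply: dvdn_trans (IH _ H); exact: dvdn_gcdr.
Qed.

Definition indep (s : seq nat) := forall k, k < size s -> ~ ing (take k s) (nth 0 s k).

Lemma main n s : free_fuel n s -> sorted ltn s -> gcd_seq s = 1 -> indep s -> 0 < size s ->
  exists c, (c = 0 \/ ~ ing s c.-1) /\
            (2 <= size s -> (size s - 2) * 2 ^ size s + 2 <= c) /\
            2 ^ size s <= (last 0 s).+1.
Proof.
elim: n s => [|n IH] s //=.
case: ifP => [/eqP Hs1 _ _ Hg _ _ | Hs1].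
  case: s Hs1 Hg => [|a [|]] //= _; rewrite /gcd_seq /= gcdn0 => ->.
  by exists 0; split; [left|].
case=> [Hsz Hl _ Hf] Hsort Hg Hind _.
move: Hsz Hl Hf Hsort Hg Hind; case/lastP: s {Hs1} => [|t r] //.
have Et : take (size t) (rcons t r) = t by rewrite -cats1 take_size_cat.
have Er : gcd_seq [:: r] = r by rewrite /gcd_seq /= gcdn0.
rewrite gcdn0 size_rcons /= Et last_rcons => Hsz Hl Hf Hsort Hg Hind.
have Ht0 : 0 < size t by [].
have Hpos : 0 < nth 0 t 0.
  have := Hind 0 ltac:(by rewrite size_rcons); rewrite take0 /= nth_rcons Ht0 => H.
  by rewrite lt0n; apply/eqP.
set d := gcd_seq t in Hl Hf.
have Hdx : d %| nth 0 t 0 by apply: gcd_seq_dvd; apply: mem_nth.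
have Hd0 : 0 < d.
  rewrite lt0n; apply/negP => /eqP H0; move: Hdx; rewrite H0 dvd0n => /eqP H.
  by rewrite H in Hpos.
have Hcop : gcdn d r = 1 by rewrite -gcd_seq_rcons cats1.
move: Hl; rewrite /lcmn Hcop divn1 => /in_gen_ing HL.
have Hd2 : 1 < d.
  rewrite ltn_neqAle Hd0 andbT; apply/negP => /eqP Hd1.
  move: HL; rewrite -Hd1 mul1n => HL.
  by apply: (Hind (size t)); rewrite ?size_rcons // Et nth_rcons ltnn eqxx.
have Hdvd : forall x, x \in t -> d %| x by move=> x Hx; apply: gcd_seq_dvd.
set t' := map (fun x => x %/ d) t in Hf.
have Ht : t = map (fun x => x * d) t'.
  rewrite /t' -map_comp -[LHS]map_id; apply/eq_in_map => x Hx /=.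
  by rewrite divnK // Hdvd.
have Hst : sorted ltn t by apply: subseq_sorted (subseq_rcons t r) Hsort => //; apply: ltn_trans.
have Hst' : sorted ltn t'.
  move: Hst; rewrite Ht sorted_map; apply: sub_sorted => x y /=.
  by rewrite ltn_pmul2r.
have Hg' : gcd_seq t' = 1.
  have := gcd_seq_scale t' d; rewrite -Ht -/d => H.
  by apply/eqP; rewrite -(eqn_pmul2r Hd0) -H mul1n.
have Hsz' : size t' = size t by rewrite size_map.
have Hind' : indep t'.
  move=> k Hk Hing; rewrite Hsz' in Hk.
  apply: (Hind k); first by rewrite size_rcons ltnW.
  rewrite -cats1 takel_cat ?(ltnW Hk) // cats1 nth_rcons Hk.
  rewrite Ht -map_take (nth_map 0); last by rewrite Hsz'.
  by apply/ing_scale; exists (nth 0 t' k).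
have Ht0' : 0 < size t' by rewrite Hsz'.
have [c1 [Hc1 [Hb1 Hl1]]] := IH t' Hf Hst' Hg' Hind' Ht0'.
have Hr : ing t' r.
  move: HL; rewrite Ht => /ing_scale [m [Hm Em]].
  suff -> : r = m by [].
  by apply/eqP; rewrite -(eqn_pmul2r Hd0) -Em mulnC.
have Hlast : last 0 t < r.
  move: Hsort Ht0; case: (t) => [|x u] //= Hp _.
  by rewrite rcons_path in Hp; case/andP: Hp.
have Hlast' : last 0 t = last 0 t' * d.
  by rewrite Ht; have := last_map (fun x => x * d) t' 0; rewrite /= => ->.
rewrite -Hsz' in Hsz *.
have HP : 1 <= last 0 t'.
  have : 2 <= 2 ^ size t' by rewrite -{1}(expn1 2) leq_exp2l.
  lia.
have L2 : last 0 t' * 2 <= last 0 t' * d by rewrite leq_mul2l Hd2 orbT.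
have Hr2 : 2 * 2 ^ size t' <= r.+1 by lia.
have H1 : 2 * c1 <= d * c1 by rewrite leq_mul2r Hd2 orbT.
have H2 : r <= (d - 1) * r by rewrite leq_pmull // subn_gt0.
have Hdr : d < r.
  have : d <= last 0 t' * d by rewrite leq_pmull.
  lia.
exists (d * c1 + (d - 1) * r - d).+1; split; [right => /= Hs|split].
- move: Hs; rewrite -cats1 ing_mid cats0 => [[k [m [Hm E]]]].
  move: Hm; rewrite Ht => /ing_scale [m' [Hm' Em]]; subst m.
  pose q := k %/ d; pose k0 := k %% d.
  have Hk : k = q * d + k0 by rewrite /q /k0 -divn_eq.
  have Hk0 : k0 < d by rewrite /k0 ltn_pmod.
  have Heq : d * c1 + (d - 1 - k0) * r = d * (q * r + m' + 1).
    have HB : k0 * r <= (d - 1) * r by rewrite leq_mul2r; apply/orP; right; lia.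
    rewrite mulnBl; move: E; rewrite Hk; rewrite !mulnDl !mulnDr; lia.
  have Hdv : d %| (d - 1 - k0) * r.
    by rewrite -(dvdn_addr _ (dvdn_mulr c1 (dvdnn d))) Heq dvdn_mulr.
  rewrite Gauss_dvdl in Hdv; last by rewrite /coprime Hcop.
  have Hz : d - 1 - k0 = 0.
    case: (posnP (d - 1 - k0)) => // Hnz.
    have := dvdn_leq Hnz Hdv; lia.
  rewrite Hz mul0n addn0 in Heq.
  have Hc : c1 = q * r + m' + 1 by apply/eqP; rewrite -(eqn_pmul2l Hd0) Heq.
  case: Hc1 => [Hc0 | Hc1]; first by lia.
  apply: Hc1; rewrite Hc addn1 /=.
  by apply: ing_add => //; apply: ing_mul.
- rewrite expnS => _.
  case: (ltnP (size t') 2) => Hs2.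
    have E1 : size t' = 1 by lia.
    rewrite E1 expn1 in Hr2 *; lia.
  have := Hb1 Hs2; set P := 2 ^ size t' in Hr2 *; set Q := (size t' - 2) * P => HQ.
  have -> : (size t' - 1) * (2 * P) + 2 = 2 * Q + 2 * P + 2.
    rewrite /Q; have -> : size t' - 1 = (size t' - 2) + 1 by lia.
    by rewrite mulnDl mul1n mulnCA mulnA; lia.
  have H3 : (d - 2) + r <= (d - 1) * r.
    have -> : d - 1 = (d - 2) + 1 by lia.
    rewrite mulnDl mul1n leq_add2r leq_pmulr //; lia.
  clearbody P Q; lia.
- by rewrite expnS.
Qed.

Theorem proposition4p2 (G : nat -> Prop) (s : seq nat) (F : nat) :
  numerical_semigroup G ->
  (exists n, ~ G n) ->
  telescopic_with G s ->
  ~ G F -> (forall n, F < n -> G n) ->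
  (size s - 2) * 2 ^ size s + 2 <= F.+1.
Proof.
move=> [G0 Gadd [N HN]] _ [[Hu Hgen Hmin] Hsort Hfree] HF HFn.
have HF1 : 0 < F by rewrite lt0n; apply/eqP => E; rewrite E in HF.
case: (ltnP (size s) 3) => Hs.
  have -> : size s - 2 = 0 by lia.
  by rewrite mul0n.
have Hing : forall n, G n <-> ing s n.
  by move=> n; split => H; [apply/in_gen_ing/Hgen | apply/Hgen/in_gen_ing].
have Hg : gcd_seq s = 1.
  have h1 := @ing_dvd s _ (proj1 (Hing N) (HN N (leqnn N))).
  have h2 := @ing_dvd s _ (proj1 (Hing N.+1) (HN N.+1 (leqnSn N))).
  by move: h2; rewrite -addn1 dvdn_addr // dvdn1 => /eqP.
have Hind : indep s.
  move=> k Hk Hin.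
  set x := nth 0 s k in Hin.
  apply: (Hmin x (mem_nth 0 Hk)) => m.
  rewrite remE index_uniq //.
  set u := take k s in Hin *; set v := drop k.+1 s.
  have Es : s = u ++ x :: v by rewrite /u /v /x -(drop_nth 0 Hk) cat_take_drop.
  have Hs' : ing s m <-> ing (u ++ x :: v) m by rewrite {1}Es.
  split.
    move/Hing/Hs'/ing_mid => [j [m' [Hm' ->]]].
    apply/in_gen_ing; apply: ing_add => //; apply: ing_mul; exact: ing_catl.
  move/in_gen_ing => H; apply/Hing/Hs'/ing_mid; exists 0, m; split => //.
have [c [Hc [Hb _]]] := @main (size s) s Hfree Hsort Hg Hind (ltac:(lia)).
have Hb' := Hb (ltac:(lia)).
case: Hc => [Hc0 | Hc]; first by lia.
have : c.-1 <= F.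
  rewrite leqNgt; apply/negP => Hlt; apply: Hc; apply/Hing; exact: HFn.
lia.
Qed.
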